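(* Let $i,j\in\{1,\dots,N\}$ and let $m\ge 0$ be an integer. If $m<\delta_{ji}$ (with $\delta_{ji}=\infty$ if there is no directed path from $j$ to $i$), then $\big((-L)^m\big)_{ij}=0$. If $m=\delta_{ji}<\infty$, then $\big((-L)^m\big)_{ij}$ equals the sum of the weights of all shortest directed paths from $j$ to $i$, and this number equals $\vartheta(\mathcal F_m^{j\to i})$.
   Context: Let $\mathcal G$ be a weighted directed graph on the vertex set $\{1,\dots,N\}$ with adjacency matrix $A=[a_{ij}]$, where $a_{ij}>0$ if there is an arc from vertex $j$ to vertex $i$ and $a_{ij}=0$ otherwise; there are no self-loops, so $a_{ii}=0$. The weight of the arc from $j$ to $i$ is $a_{ij}$. The Laplacian is $L=D-A$, where $D=\mathrm{diag}\big(\sum_{j}a_{1j},\dots,\sum_j a_{Nj}\big)$. A directed path from $u$ to $w$ is a sequence of pairwise distinct vertices $u=v_0,v_1,\dots,v_\ell=w$ such that there is an arc from $v_k$ to $v_{k+1}$ for each $k$. Its length is $\ell$, and its weight is the product of the weights of its arcs (the empty product is $1$). The distance $\delta_{uw}$ is the length of a shortest directed path from $u$ to $w$. A diverging (out-)tree is a set of arcs on a vertex subset that has a root vertex of in-degree $0$, has every other vertex of in-degree exactly $1$, and has a directed path from the root to every vertex of the subset. A spanning diverging forest is a set of arcs of $\mathcal G$ such that the vertex set $\{1,\dots,N\}$ is partitioned into vertex-disjoint diverging trees formed by these arcs; isolated vertices are trivial trees. The weight of a forest is the product of the weights of its arcs. For vertices $u,w$ and an integer $k\ge0$, $\mathcal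 F_k^{u\to w}$ denotes the set of all spanning diverging forests with exactly $k$ arcs in which $u$ is the root of a tree that contains $w$. The quantity $\vartheta(\mathcal F_k^{u\to w})$ is the sum of the weights of the forests in $\mathcal F_k^{u\to w}$. *)

(* Defs.v *)
From HB Require Import structures.
From mathcomp Require Import all_boot all_order all_algebra.
Set Implicit Arguments. Unset Strict Implicit. Unset Printing Implicit Defensive.
Import Order.TTheory GRing.Theory Num.Theory.
Local Open Scope ring_scope.

Section Graph.
Variables (R : realFieldType) (N : nat) (A : 'M[R]_N).

Definition arc (x y : 'I_N) : bool := 0 < A y x.

Definition laplacian : 'M[R]_N :=
  \matrix_(i, k) ((i == k)%:R * (\sum_l A i l) - A i k).

(* A directed path u = v_0, v_1, ..., v_l = w is encoded by u and the
   sequence s = [:: v_1; ...; v_l]; its length is size s. *)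
Definition is_dpath (u w : 'I_N) (s : seq 'I_N) : bool :=
  [&& uniq (u :: s), path arc u s & last u s == w].

Fixpoint pweight (u : 'I_N) (s : seq 'I_N) : R :=
  match s with
  | [::] => 1
  | v :: s' => A v u * pweight v s'
  end.

(* Arc sets are sets of pairs (x, y) meaning the arc from x to y. *)
Definition indeg (F : {set 'I_N * 'I_N}) (B : {set 'I_N}) (v : 'I_N) : nat :=
  #|[set x in B | (x, v) \in F]|.

Definition is_dtree (F : {set 'I_N * 'I_N}) (B : {set 'I_N}) (r : 'I_N) : bool :=
  [&& r \in B, indeg F B r == 0%N,
      [forall v in B, (v != r) ==> (indeg F B v == 1%N)] &
      [forall v in B,
         connect (fun x y => [&& (x, y) \in F, x \in B & y \in B]) r v]].

Definition forest_partition (F : {set 'I_N * 'I_N}) (P : {set {set 'I_N}}) : bool :=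
  [&& partition P [set: 'I_N],
      [forall e in F, [exists B in P, (e.1 \in B) && (e.2 \in B)]] &
      [forall B in P, [exists r, is_dtree F B r]]].

Definition is_sdforest (F : {set 'I_N * 'I_N}) : bool :=
  [forall e in F, arc e.1 e.2] && [exists P, forest_partition F P].

Definition in_Fk (k : nat) (u w : 'I_N) (F : {set 'I_N * 'I_N}) : bool :=
  [&& [forall e in F, arc e.1 e.2], #|F| == k &
      [exists P, forest_partition F P &&
         [exists B in P, [&& u \in B, w \in B & is_dtree F B u]]]].

Definition fweight (F : {set 'I_N * 'I_N}) : R := \prod_(e in F) A e.2 e.1.

Definition theta (k : nat) (u w : 'I_N) : R :=
  \sum_(F : {set 'I_N * 'I_N} | in_Fk k u w F) fweight F.

End Graph.

Definition mxpow (R : realFieldType) (N : nat) (M : 'M[R]_N) (m : nat) : 'M[R]_N :=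
  iter m (mulmx M) 1%:M.

(* Main.v *)
Require Import Defs.
From HB Require Import structures.
From mathcomp Require Import all_boot all_order all_algebra.
Import Order.TTheory GRing.Theory Num.Theory.

Fixpoint arcsq {T : Type} (u : T) (s : seq T) : seq (T * T) :=
  match s with [::] => [::] | v :: s' => (u, v) :: arcsq v s' end.

Lemma size_arcsq (T : Type) (u : T) s : size (arcsq u s) = size s.
Proof. by elim: s u => [|v s IH] u //=; rewrite IH. Qed.

Lemma mem_arcsq (T : eqType) (u : T) s x y :
  (x, y) \in arcsq u s -> x \in u :: s /\ y \in s.
Proof.
elim: s u => [|v s IH] u //=; rewrite in_cons => /orP [/eqP [-> ->]|/IH [h1 h2]].
  by rewrite !inE !eqxx.
by split; rewrite ?h1 ?in_cons ?h2 ?orbT.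
Qed.

Lemma uniq_arcsq (T : eqType) (u : T) s : uniq (u :: s) -> uniq (arcsq u s).
Proof.
elim: s u => [|v s IH] u //= /andP [hu hs]; rewrite IH // andbT.
apply/negP => /mem_arcsq [h _]; by rewrite h in hu.
Qed.

Lemma arcsq_path (T : eqType) (e : rel T) u s :
  path e u s = all (fun p => e p.1 p.2) (arcsq u s).
Proof. by elim: s u => [|v s IH] u //=; rewrite IH. Qed.

Lemma arcsq_pred (T : eqType) (u : T) s y : uniq (u :: s) -> y \in s ->
  exists x, x \in u :: s /\ forall x', ((x', y) \in arcsq u s) = (x' == x).
Proof.
elim: s u => [|v s IH] u //= /andP [hu hs]; rewrite inE => /orP [/eqP ->|ys].
  exists u; split; first by rewrite inE eqxx.
  move=> x'; rewrite in_cons xpair_eqE eqxx andbT.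
  case: (x' =P u) => //= _; apply/negP => /mem_arcsq [_ h].
  by move: hs; rewrite /= h.
have [x [xin hx]] := IH v hs ys.
exists x; split; first by rewrite inE xin orbT.
move=> x'; rewrite in_cons hx xpair_eqE.
case: (y =P v) => [eyv|]; last by rewrite andbF.
by move: hs; rewrite /= -eyv ys.
Qed.

Lemma arcsq_inj (T : eqType) (u : T) s s' : uniq (u :: s) -> uniq (u :: s') ->
  arcsq u s =i arcsq u s' -> s = s'.
Proof.
elim: s u s' => [|v s IH] u [|w s'] //= hs hs' heq.
- by have := heq (u, w); rewrite inE eqxx.
- by have := heq (u, v); rewrite inE eqxx.
have: (u, v) \in (u, w) :: arcsq w s' by rewrite -heq inE eqxx.
rewrite in_cons => /orP [/eqP [ewv]|/mem_arcsq [h _]]; last first.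
  by move: hs'; rewrite /= h.
subst w.
move: hs hs' => /andP [hu hs] /andP [hu' hs'].
congr cons; apply: (IH v s' hs hs') => e.
have Hne: forall t, u \notin v :: t -> (e \in arcsq v t) = ((e \in (u, v) :: arcsq v t) && (e != (u, v))).
  move=> t hut; rewrite in_cons; case: (e =P (u, v)) => [->|] /=; last by rewrite andbT.
  by apply/negP => /mem_arcsq [h _]; rewrite h in hut.
by rewrite Hne // heq -Hne.
Qed.

Lemma shorten_dpath (T : eqType) (e : rel T) u s : path e u s ->
  exists s', [/\ uniq (u :: s'), path e u s', last u s' = last u s & size s' <= size s].
Proof.
case/shortenP => s' h1 h2 h3; exists s'; split => //.
apply: uniq_leq_size => [|x xs]; first by case/andP: h2.
exact: h3.
Qed.

Lemma suffix_dpath (T : eqType) (e : rel T) u s x : uniq (u :: s) -> path e u s -> x \in s ->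
  exists s2, [/\ uniq (x :: s2), path e x s2, last x s2 = last u s & size s2 < size s].
Proof.
move=> hu hp xs; move: hu hp; case/splitPr: xs => s1 s2; exists s2.
move: hu hp; rewrite cat_path last_cat /= size_cat /= => hu /and3P [_ _ hp]; split => //.
  by move: hu => /andP [_]; rewrite cat_uniq => /and3P [_ _].
by rewrite addnS ltnS leq_addl.
Qed.

Arguments shorten_dpath {T e u s}.
Arguments suffix_dpath {T e u s x}.
Arguments mem_arcsq {T u s x y}.
Arguments uniq_arcsq {T u s}.
Arguments arcsq_pred {T u s y}.
Arguments arcsq_inj {T u s s'}.

Local Open Scope ring_scope.

Lemma mxpowSr (R : realFieldType) (N : nat) (M : 'M[R]_N) m :
  mxpow M m.+1 = mxpow M m *m M.
Proof.
rewrite /mxpow; elim: m => [|m IH]; first by rewrite iterS /= mulmx1 mul1mx.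
by rewrite -[LHS]/(M *m iter m.+1 (mulmx M) 1%:M) {1}IH mulmxA.
Qed.

Lemma dpath_cons (R : realFieldType) (N : nat) (A : 'M[R]_N) j i k (t : seq 'I_N) :
  is_dpath A j i (k :: t) = [&& j \notin k :: t, Defs.arc A j k & is_dpath A k i t].
Proof.
rewrite /is_dpath /=.
by case: (j \notin _); case: (k \in t); case: (uniq t); case: (Defs.arc _ j k).
Qed.

Lemma key (R : realFieldType) (N : nat) (A : 'M[R]_N)
  (A_nneg : forall i j, 0 <= A i j) (A_diag : forall i, A i i = 0) m :
  forall (i j : 'I_N), (forall s : seq 'I_N, is_dpath A j i s -> (m <= size s)%N) ->
  mxpow (- laplacian A) m i j = \sum_(t : m.-tuple 'I_N | is_dpath A j i t) pweight A j t.
Proof.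
elim: m => [|m IH] i j H.
  rewrite /mxpow /= mxE.
  rewrite big_mkcond (big_pred1 [tuple]) /=; last by move=> t; apply/esym/eqP; exact: tuple0.
  by rewrite /is_dpath /= eq_sym; case: (j == i).
rewrite mxpowSr mxE.
rewrite (reindex (fun p : 'I_N * m.-tuple 'I_N => [tuple of p.1 :: p.2])) /=; last first.
  exists (fun t => (thead t, [tuple of behead t])) => [[k t]|t] _ /=.
    by congr pair; apply: val_inj.
  by rewrite [in RHS](tuple_eta t).
set F := fun (p : 'I_N * m.-tuple 'I_N) => if is_dpath A j i (p.1 :: p.2) then A p.1 j * pweight A p.1 p.2 else 0.
rewrite [RHS]big_mkcond (eq_bigr F) //.
have ->: \sum_p F p = \sum_k \sum_t F (k, t).
  by rewrite pair_bigA; apply: eq_bigr => [[k t]].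
apply: eq_bigr => k _; rewrite /F /=.
have Hnil: forall i' j', (forall s : seq 'I_N, is_dpath A j' i' s -> (m < size s)%N) ->
    \sum_(t : m.-tuple 'I_N | is_dpath A j' i' t) pweight A j' t = 0.
  by move=> i' j' H'; apply: big1 => t /H'; rewrite size_tuple ltnn.
case: (k =P j) => [->|/eqP kj].
  rewrite IH; last by move=> s /H /ltnW.
  rewrite Hnil // mul0r big1 // => t _.
  by rewrite dpath_cons inE eqxx.
rewrite !mxE (negbTE kj) mul0r add0r opprK.
case: (boolP (Defs.arc A j k)) => ajk; last first.
  have ->: A k j = 0.
    by apply/eqP; move: (A_nneg k j) ajk; rewrite /Defs.arc le_eqVlt => /orP [/eqP <-|->].
  rewrite mulr0 big1 // => t _.
  by rewrite dpath_cons (negbTE ajk) andbF.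
rewrite IH; last first.
  move=> s hs; rewrite leqNgt; apply/negP => lt.
  case/and3P: (hs) => _ hp hl.
  have hp': path (Defs.arc A) j (k :: s) by rewrite /= ajk.
  have [s' [h1 h2 h3 h4]] := shorten_dpath hp'.
  have := H s'; rewrite /is_dpath h1 h2 h3 /= (eqP hl) eqxx => /(_ isT).
  by move=> h; move: (leq_trans h h4); rewrite /= ltnS leqNgt lt.
rewrite mulr_suml big_mkcond; apply: eq_bigr => t _.
rewrite dpath_cons ajk /=.
case: (boolP (is_dpath A k i t)) => hd; last by rewrite andbF.
rewrite andbT mulrC.
have ->: j \notin k :: t.
  rewrite inE negb_or; apply/andP; split.
    by apply/eqP => ejk; move: ajk; rewrite /Defs.arc -ejk A_diag ltxx.
  apply/negP => jt; case/and3P: hd => hu hp hl.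
  have [s2 [h1 h2 h3 h4]] := suffix_dpath hu hp jt.
  have := H s2; rewrite /is_dpath h1 h2 h3 hl => /(_ isT).
  by rewrite size_tuple in h4; rewrite ltnNge (ltnW h4).
by [].
Qed.

Lemma dtree_path (N : nat) (j : 'I_N) (t : seq 'I_N) :
  uniq (j :: t) ->
  is_dtree [set e in arcsq j t] [set v in j :: t] j.
Proof.
move=> hu; apply/and4P; split.
- by rewrite inE mem_head.
- rewrite /indeg cards_eq0; apply/eqP/setP => x; rewrite !inE.
  apply/negP => /andP [_ /mem_arcsq [_ jt]].
  by move: hu => /= /andP [/negP].
- apply/forallP => v; apply/implyP => vB; apply/implyP => vj.
  have vt : v \in t by move: vB; rewrite inE in_cons (negbTE vj).
  have [x [xin hx]] := arcsq_pred hu vt.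
  rewrite /indeg (_ : [set _ in _ | _] = [set x]) ?cards1 //.
  apply/setP => y; rewrite !inE hx.
  by case: (y =P x) => [->|]; rewrite ?andbF // andbT -in_cons.
- apply/forallP => v; apply/implyP => vB.
  apply: (path_connect (p := t)); last by rewrite inE in vB.
  rewrite arcsq_path; apply/allP => [[x y]] hxy /=.
  have [hx hy] := mem_arcsq hxy.
  by rewrite !in_set hxy hx in_cons hy orbT.
Qed.

Lemma dtree_single (N : nat) (j : 'I_N) (t : seq 'I_N) x :
  x \notin j :: t -> is_dtree [set e in arcsq j t] [set x] x.
Proof.
move=> hx; apply/and4P; split.
- by rewrite set11.
- rewrite /indeg cards_eq0; apply/eqP/setP => y; rewrite !inE.
  apply/negP => /andP [/eqP -> /mem_arcsq [h _]].
  by rewrite h in hx.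
- apply/forallP => v; apply/implyP; rewrite inE => /eqP ->.
  by rewrite eqxx.
- apply/forallP => v; apply/implyP; rewrite inE => /eqP ->.
  exact: connect0.
Qed.

Lemma pweight_arcsq (R : realFieldType) (N : nat) (A : 'M[R]_N) u s :
  pweight A u s = \prod_(e <- arcsq u s) A e.2 e.1.
Proof.
by elim: s u => [|v s IH] u /=; rewrite ?big_nil // big_cons IH.
Qed.

Lemma theta_eq (R : realFieldType) (N : nat) (A : 'M[R]_N) (i j : 'I_N) (m : nat)
  (H : forall s : seq 'I_N, is_dpath A j i s -> (m <= size s)%N) :
  \sum_(t : m.-tuple 'I_N | is_dpath A j i t) pweight A j t = theta A m j i.
Proof.
pose h := fun t : m.-tuple 'I_N => [set e in arcsq j (val t)].
pose D := [set t : m.-tuple 'I_N | is_dpath A j i t].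
have hinj : {in D &, injective h}.
  move=> t1 t2; rewrite !inE => /and3P [u1 _ _] /and3P [u2 _ _] e.
  apply: val_inj; apply: (arcsq_inj u1 u2) => x.
  by move/setP: e => /(_ x); rewrite !inE.
have hmem : forall F, in_Fk A m j i F = (F \in h @: D).
  move=> F; apply/idP/idP.
    case/and3P => harcs /eqP hcard /existsP [P /andP [_ /existsP [B /andP [_ /and3P [jB iB hdt]]]]].
    case/and4P: hdt => _ _ _ /forallP hcon.
    have := hcon i; rewrite iB /= => /connectP [p hp hl].
    have [s [hu hps hls hsz]] := shorten_dpath hp.
    have sF : forall e, e \in arcsq j s -> e \in F.
      move: hps; rewrite arcsq_path => /allP hall [x y] he.
      by case/and3P: (hall _ he).
    have hpa : path (Defs.arc A) j s.
      rewrite arcsq_path; apply/allP => [[x y]] /sF hxy.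
      exact: (implyP (forallP harcs (x, y)) hxy).
    have hd : is_dpath A j i s by rewrite /is_dpath hu hpa hls -hl eqxx.
    have hm := H s hd.
    have hsub : [set e in arcsq j s] \subset F.
      by apply/subsetP => e; rewrite inE; exact: sF.
    have hcs : #|[set e in arcsq j s]| = size s.
      by rewrite cardsE (card_uniqP (uniq_arcsq hu)) size_arcsq.
    have hsm : size s == m.
      by rewrite eqn_leq hm andbT -hcs -hcard subset_leq_card.
    apply/imsetP; exists (Tuple hsm); first by rewrite inE.
    by apply/esym/eqP; rewrite eqEcard /= hsub hcs hcard (eqP hsm) leqnn.
  case/imsetP => t; rewrite inE => ht ->.
  have [hu hpa hl] := and3P ht.
  have hsz : size (arcsq j t) = m by rewrite size_arcsq size_tuple.
  apply/and3P; split.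
  - apply/forallP => [[x y]]; apply/implyP; rewrite inE => hxy.
    by move: hpa; rewrite arcsq_path => /allP /(_ _ hxy).
  - by rewrite cardsE (card_uniqP (uniq_arcsq hu)) hsz.
  pose g := fun v : 'I_N => if v \in j :: val t then j else v.
  have hblock : forall x, [set y in [set: 'I_N] | g x == g y]
      = if x \in j :: val t then [set v in j :: val t] else [set x].
    move=> x; apply/setP => y; rewrite /g.
    case: (boolP (x \in j :: val t)) => hx; case: (boolP (y \in j :: val t)) => hy.
    - by rewrite !in_set /= hy eqxx.
    - rewrite !in_set /= (negbTE hy); apply/negP => /eqP ejy.
      by rewrite -ejy mem_head in hy.
    - rewrite !in_set /= hy; case: (x =P j) => [exj|]; first by rewrite exj mem_head in hx.
      move=> _; rewrite inE; case: (y =P x) => // eyx; by rewrite -eyx hy in hx.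
    - by rewrite [LHS]in_set /= (negbTE hy) /= in_set1 in_setT eq_sym.
  have Bin : [set v in j :: val t] \in preim_partition g [set: 'I_N].
    apply/imsetP; exists j => //; by rewrite hblock mem_head.
  apply/existsP; exists (preim_partition g [set: 'I_N]); apply/andP; split.
    apply/and3P; split.
    - exact: preim_partitionP.
    - apply/forallP => [[x y]]; apply/implyP; rewrite inE => /mem_arcsq [hx hy].
      apply/existsP; exists [set v in j :: val t]; rewrite Bin /= !inE.
      by rewrite -in_cons hx -in_cons in_cons hy orbT.
    - apply/forallP => B'; apply/implyP => /imsetP [x _ ->].
      apply/existsP; rewrite hblock.
      case: (boolP (x \in j :: val t)) => hx.
        by exists j; apply: dtree_path.
      by exists x; apply: dtree_single.
  apply/existsP; exists [set v in j :: val t]; rewrite Bin /=.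
  rewrite !in_set mem_head -(eqP hl) mem_last /=; exact: dtree_path.
rewrite /theta (eq_bigl _ _ hmem) big_imset //=.
apply: eq_big => [t|t ht]; first by rewrite inE.
have [hu _ _] := and3P ht.
rewrite /fweight pweight_arcsq (big_uniq _ (uniq_arcsq hu)).
by apply: eq_bigl => e; rewrite inE.
Qed.

Theorem lemma1 (R : realFieldType) (N : nat) (A : 'M[R]_N)
  (A_nneg : forall i j, 0 <= A i j) (A_diag : forall i, A i i = 0)
  (i j : 'I_N) (m : nat) :
  (* m < delta_{ji}: no directed path from j to i of length <= m *)
  ((forall s : seq 'I_N, is_dpath A j i s -> (m < size s)%N) ->
     mxpow (- laplacian A) m i j = 0)
  /\
  (* m = delta_{ji} < oo *)
  ((exists s : seq 'I_N, is_dpath A j i s /\ size s = m) ->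
   (forall s : seq 'I_N, is_dpath A j i s -> (m <= size s)%N) ->
     mxpow (- laplacian A) m i j
       = \sum_(t : m.-tuple 'I_N | is_dpath A j i t) pweight A j t
     /\ \sum_(t : m.-tuple 'I_N | is_dpath A j i t) pweight A j t
       = theta A m j i).
Proof.
split.
- move=> H; rewrite (@key _ _ A A_nneg A_diag m i j); last by move=> s /H /ltnW.
  by apply: big1 => t /H; rewrite size_tuple ltnn.
- move=> _ H; rewrite (@key _ _ A A_nneg A_diag m i j H); split => //.
  exact: theta_eq.
Qed.
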